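(* Let $\mathcal{C}\subseteq\mathbb{R}^n$ be a nonempty closed convex set. For any $\theta_0\in\mathcal{C}$, $$K_{\mathcal{C}}=\{v:\mathbb{R}_+v\subseteq F_{\mathcal{C}}(\theta_0)\}=\bigcap_{\sigma>0}\frac{F_{\mathcal{C}}(\theta_0)}{\sigma}.$$ Moreover, $K_{\mathcal{C}}\subseteq T_{\mathcal{C}}(\theta)$ for every $\theta\in\mathcal{C}$. If furthermore $F_{\mathcal{C}}(\theta_0)$ is a cone, then for $\theta\in\mathcal{C}$ the equality $K_{\mathcal{C}}=T_{\mathcal{C}}(\theta)$ holds if and only if $\theta_0-(\theta-\theta_0)\in\mathcal{C}$; in particular $K_{\mathcal{C}}=T_{\mathcal{C}}(\theta_0)=F_{\mathcal{C}}(\theta_0)$.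
   Context: For $\theta_0\in\mathcal{C}$: $F_{\mathcal{C}}(\theta_0)=\{\theta-\theta_0:\theta\in\mathcal{C}\}$, and the tangent cone is $T_{\mathcal{C}}(\theta_0)=\mathrm{cl}\{\alpha(\theta-\theta_0):\alpha\ge0,\theta\in\mathcal{C}\}$. The core cone is $K_{\mathcal{C}}=\bigcap_{\theta\in\mathcal{C}}T_{\mathcal{C}}(\theta)$. For $v\in\mathbb{R}^n$, $\mathbb{R}_+v=\{\alpha v:\alpha\ge0\}$, and $S/\sigma=\{s/\sigma:s\in S\}$. *)

(* Defs.v *)
(* R^n is modelled as 'rV[R]_n, R : realType. *)
From HB Require Import structures.
From mathcomp Require Import all_boot all_order all_algebra.
From mathcomp Require Import all_classical all_reals all_analysis.
Set Implicit Arguments. Unset Strict Implicit. Unset Printing Implicit Defensive.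
Import Order.TTheory GRing.Theory Num.Theory.
Import numFieldNormedType.Exports.
Local Open Scope classical_set_scope.
Local Open Scope ring_scope.

Section Defs.
Context {R : realType} {n : nat}.
Local Notation V := 'rV[R]_n.

Definition Fset (C : set V) (theta0 : V) : set V :=
  [set theta - theta0 | theta in C].

Definition Tcone (C : set V) (theta0 : V) : set V :=
  closure [set v | exists alpha theta, 0 <= alpha /\ C theta /\
                                      v = alpha *: (theta - theta0)].

Definition Kcore (C : set V) : set V := \bigcap_(theta in C) Tcone C theta.

Definition ray (v : V) : set V := [set alpha *: v | alpha in [set a : R | 0 <= a]].

Definition sdiv (S : set V) (sigma : R) : set V := [set sigma^-1 *: s | s in S].

Definition is_cone (S : set V) : Prop :=
  forall v alpha, S v -> 0 <= alpha -> S (alpha *: v).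
End Defs.

(* Main.v *)
Require Import Defs.
From HB Require Import structures.
From mathcomp Require Import all_boot all_order all_algebra.
From mathcomp Require Import all_classical all_reals all_analysis.
From mathcomp Require Import ring lra.
Import Order.TTheory GRing.Theory Num.Theory.
Import numFieldNormedType.Exports.
Local Open Scope classical_set_scope.
Local Open Scope ring_scope.

Section H.
Context {R : realType} {n : nat}.
Local Notation V := 'rV[R]_n.
Implicit Types u w : V.

Lemma convC' (C : set V) x y (l : R) : convex_set C -> C x -> C y -> 0 <= l -> l <= 1 ->
  C (l *: x + (1 - l) *: y).
Proof.
move=> cC Cx Cy l0 l1.
have := cC x y (Itv01 l0 l1) (mem_set Cx) (mem_set Cy).
by rewrite inE.
Qed.

Definition dot (u w : V) : R := \sum_i u ord0 i * w ord0 i.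

Lemma dotC u w : dot u w = dot w u.
Proof. by apply: eq_bigr => i _; rewrite mulrC. Qed.

Lemma dotDr u w1 w2 : dot u (w1 + w2) = dot u w1 + dot u w2.
Proof. by rewrite /dot -big_split; apply: eq_bigr => i _; rewrite !mxE mulrDr. Qed.

Lemma dotZr u a w : dot u (a *: w) = a * dot u w.
Proof. by rewrite /dot mulr_sumr; apply: eq_bigr => i _; rewrite !mxE mulrCA. Qed.

Lemma dotNr u w : dot u (- w) = - dot u w.
Proof. by rewrite -scaleN1r dotZr mulN1r. Qed.

Lemma dotBr u w1 w2 : dot u (w1 - w2) = dot u w1 - dot u w2.
Proof. by rewrite dotDr dotNr. Qed.

Lemma dotDl u1 u2 w : dot (u1 + u2) w = dot u1 w + dot u2 w.
Proof. by rewrite dotC dotDr !(dotC w). Qed.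
Lemma dotZl a u w : dot (a *: u) w = a * dot u w.
Proof. by rewrite dotC dotZr dotC. Qed.
Lemma dotBl u1 u2 w : dot (u1 - u2) w = dot u1 w - dot u2 w.
Proof. by rewrite dotC dotBr !(dotC w). Qed.

Lemma dot_ge0 u : 0 <= dot u u.
Proof. by apply: sumr_ge0 => i _; rewrite -expr2 sqr_ge0. Qed.

Lemma dot_coord u i : (u ord0 i) ^+ 2 <= dot u u.
Proof.
rewrite /dot (bigD1 i) //= -expr2 lerDl.
by apply: sumr_ge0 => j _; rewrite -expr2 sqr_ge0.
Qed.

Lemma dot_eq0 u : dot u u = 0 -> u = 0.
Proof.
move=> h; apply/matrixP => i j; rewrite ord1 mxE.
have := dot_coord u j; rewrite h => H.
by apply/eqP; rewrite -sqrf_eq0 eq_le H sqr_ge0.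
Qed.

Lemma dot_cont u : continuous (dot u).
Proof.
rewrite /dot.
apply: (@continuous_big _ _ +%R 0 xpredT add_continuous) => i _.
move=> w; apply: (@continuousM R _ (fun=> u ord0 i) (fun x : V => x ord0 i) w).
  exact: cst_continuous.
exact: coord_continuous.
Qed.

Lemma dist_cont x : continuous (fun y : V => dot (x - y) (x - y)).
Proof.
have h : continuous (fun y : V => x - y).
  move=> z; apply: (@continuousB R V _ (fun=> x) id z); [exact: cst_continuous | by move=> ?; exact: cvg_id].
have hi i : continuous (fun y : V => (x - y) ord0 i).
  move=> z; apply: (@continuous_comp _ _ _ (fun y : V => x - y) (fun M : V => M ord0 i)).
    exact: h.
  exact: coord_continuous.
rewrite /dot.
apply: (@continuous_big _ _ +%R 0 xpredT add_continuous) => i _.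
move=> w; apply: (@continuousM R _ (fun y : V => (x - y) ord0 i) (fun y : V => (x - y) ord0 i) w); exact: hi.
Qed.


Lemma dot_expand u w (l : R) :
  dot (u - l *: w) (u - l *: w) = dot u u - 2 * l * dot u w + l ^+ 2 * dot w w.
Proof.
rewrite !(dotBl, dotBr, dotZl, dotZr) (dotC w u).
by ring.
Qed.

Lemma abs_le1sq (a : R) : `|a| <= 1 + a ^+ 2.
Proof.
have [h|h] := leP `|a| 1.
  by apply: (le_trans h); rewrite lerDl sqr_ge0.
rewrite -real_normK ?num_real //.
apply: (le_trans _ (ler_wpDl ler01 (lexx _))).
by rewrite expr2 ler_peMl // ltW.
Qed.

Lemma norm_le_dot u : `|u| <= 1 + dot u u.
Proof.
rewrite [leLHS]/Num.Def.normr /= mx_normrE.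
apply: bigmax_le => [|[i j] _] /=.
  by apply: addr_ge0 => //; exact: dot_ge0.
rewrite ord1; apply: (le_trans (abs_le1sq _)).
by rewrite lerD2l dot_coord.
Qed.

Lemma proj_ex (C : set V) x : closed C -> convex_set C -> C !=set0 ->
  exists p, C p /\ forall y, C y -> dot (x - p) (y - p) <= 0.
Proof.
move=> Ccl Ccv [t0 Ct0].
pose f := fun y : V => dot (x - y) (x - y).
pose M := f t0.
pose A := C `&` (f @^-1` [set r | r <= M]).
have Acl : closed A.
  apply: closedI => //; apply: preimage_closed; last exact: closed_le.
  by move=> z _; exact: dist_cont.
have Abd : bounded_set A.
  rewrite /= /bounded_near; near=> B => y [_ /= hy].
  have : `|y| <= `|x| + (1 + M).
    have -> : y = x - (x - y) by rewrite opprB addrC subrK.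
    apply: (le_trans (ler_normB _ _)); rewrite lerD2l.
    by apply: (le_trans (norm_le_dot _)); rewrite lerD2l.
  move=> hyB; apply: (le_trans hyB).
  near: B; apply: nbhs_pinfty_ge; exact: num_real.
have Acp : compact A by exact: bounded_closed_compact.
have [p pA pmin] : exists2 c, c \in A & forall t, t \in A -> f c <= f t.
  apply: EVT_min_rV => //; first by exists t0; split => //=.
  by apply: continuous_subspaceT => z; exact: dist_cont.
move: pA; rewrite inE => -[Cp fpM]; exists p; split => // y Cy.
have pminC : forall z, C z -> f p <= f z.
  move=> z Cz; have [h|h] := leP (f z) M.
    by apply: pmin; rewrite inE.
  by apply: (le_trans fpM); exact: ltW.
set w := y - p; set a := dot (x - p) w; set b := dot w w.
have key : forall l, 0 < l -> l <= 1 -> 2 * a <= l * b.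
  move=> l l0 l1.
  have := pminC (l *: y + (1 - l) *: p) (@convC' C y p l Ccv Cy Cp (ltW l0) l1); rewrite /f.
  have -> : x - (l *: y + (1 - l) *: p) = (x - p) - l *: w.
    rewrite /w scalerBr scalerBl scale1r !opprD !opprK !addrA.
    by congr (_ + _); rewrite addrAC.
  rewrite /f dot_expand -/a -/b => h.
  have : l * (2 * a) <= l * (l * b) by nra.
  by rewrite ler_pM2l.
rewrite leNgt; apply/negP => a0.
have b0 : 0 <= b by exact: dot_ge0.
have := key (a / (a + b)).
rewrite divr_gt0 ?ltr_wpDr // ler_pdivrMr ?ltr_wpDr // mul1r lerDl b0.
move=> /(_ isT isT).
rewrite mulrAC ler_pdivlMr ?ltr_wpDr //.
nra.
Unshelve. all: by end_near.
Qed.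



Lemma Fset_iff (C : set V) t0 v : Fset C t0 v <-> C (v + t0).
Proof.
split; first by move=> [y Cy <-]; rewrite subrK.
by move=> h; exists (v + t0) => //; rewrite addrK.
Qed.

Lemma cone_sub_T (C : set V) th y (al : R) : C y -> 0 <= al ->
  Tcone C th (al *: (y - th)).
Proof. by move=> Cy al0; apply: subset_closure; exists al, y. Qed.

Lemma T_dot (C : set V) p u v :
  (forall y, C y -> dot u (y - p) <= 0) -> Tcone C p v -> dot u v <= 0.
Proof.
move=> h; rewrite /Tcone.
have cl : closed [set w : V | dot u w <= 0].
  have -> : [set w : V | dot u w <= 0] = dot u @^-1` [set r | r <= 0] by [].
  apply: preimage_closed; last exact: closed_le.
  by move=> z _; exact: dot_cont.
move=> Tv.
have : closure [set w : V | dot u w <= 0] v.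
  apply: closureS Tv => w [al [y [al0 [Cy ->]]]]; rewrite /= dotZr.
  by rewrite mulr_ge0_le0 // h.
by rewrite -(proj1 (closure_id _) cl).
Qed.

Lemma rec_sub_K (C : set V) t0 v : C t0 -> ray v `<=` Fset C t0 ->
  forall th, C th -> Tcone C th v.
Proof.
move=> Ct0 hv th Cth B /nbhs_ballP [e e0 he].
set c := `|t0 - th|.
have c0 : 0 <= c by exact: normr_ge0.
set al := (c + 1) / e.
have al0 : 0 < al by rewrite divr_gt0 // ltr_wpDl.
have [y Cy hy] : Fset C t0 (al *: v) by apply: hv; exists al => //; exact: ltW.
exists (al^-1 *: (y - th)); split.
  by exists al^-1, y; split => //; rewrite invr_ge0 ltW.
apply: he; rewrite -ball_normE /ball_ /=.
have -> : y - th = al *: v + (t0 - th) by rewrite -hy addrA subrK.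
rewrite scalerDr scalerA mulVf ?gt_eqF // scale1r opprD addrA subrr add0r normrN.
rewrite normrZ ger0_norm ?invr_ge0 ?ltW // -/c /al invf_div.
rewrite mulrAC ltr_pdivrMr ?ltr_wpDl //.
by rewrite ltr_pM2l // ltrDl.
Qed.

Lemma K_sub_rec (C : set V) t0 v : closed C -> convex_set C -> C t0 ->
  (forall th, C th -> Tcone C th v) -> ray v `<=` Fset C t0.
Proof.
move=> Ccl Ccv Ct0 hv _ [t t0le <-].
apply/Fset_iff.
set x := t *: v + t0.
have [p [Cp hp]] := @proj_ex C x Ccl Ccv (ex_intro _ t0 Ct0).
have hdv : dot (x - p) v <= 0 by exact: T_dot hp (hv p Cp).
have h0 := hp t0 Ct0.
have hle : dot (x - p) (x - p) <= 0.
  have e : x - p = t *: v + (t0 - p) by rewrite /x addrA.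
  rewrite {2}e dotDr dotZr.
  by rewrite -[0]addr0 lerD // mulr_ge0_le0.
have /dot_eq0 /eqP : dot (x - p) (x - p) = 0 by apply/eqP; rewrite eq_le hle dot_ge0.
by rewrite subr_eq0 => /eqP ->.
Qed.

Lemma Fset_closed (C : set V) t0 : closed C -> closed (Fset C t0).
Proof.
move=> Ccl.
have -> : Fset C t0 = (fun w : V => w + t0) @^-1` C.
  by apply/seteqP; split => w /Fset_iff.
apply: preimage_closed => // z _.
apply: (@continuousD R V _ id (fun=> t0) z); first by move=> ?; exact: cvg_id.
exact: cst_continuous.
Qed.

Lemma Fset_add (C : set V) t0 : convex_set C -> is_cone (Fset C t0) ->
  forall a b, Fset C t0 a -> Fset C t0 b -> Fset C t0 (a + b).
Proof.
move=> Ccv Fc a b /Fset_iff Ca /Fset_iff Cb.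
have h2 : (2 : R)^-1 + 2^-1 = 1 by have := splitr (1 : R); rewrite mul1r => <-.
have hm : Fset C t0 (2^-1 *: a + 2^-1 *: b).
  apply/Fset_iff.
  have := @convC' C (a + t0) (b + t0) (2^-1) Ccv Ca Cb.
  rewrite invr_ge0 ler0n invf_le1 ?ler1n ?ltr0n // => /(_ isT isT).
  have -> : 1 - (2 : R)^-1 = 2^-1 by rewrite -{1}h2 addrK.
  by rewrite !scalerDr addrACA -scalerDl h2 scale1r.
have := Fc _ 2 hm (ler0n _ _).
by rewrite scalerDr !scalerA mulfV ?pnatr_eq0 // !scale1r.
Qed.
End H.

Theorem lemma7 (R : realType) (n : nat) (C : set 'rV[R]_n) :
  C !=set0 -> closed C -> convex_set C ->
  forall theta0 : 'rV[R]_n, C theta0 ->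
    (Kcore C = [set v | ray v `<=` Fset C theta0] /\
     Kcore C = \bigcap_(sigma in [set s : R | 0 < s]) sdiv (Fset C theta0) sigma) /\
    (forall theta, C theta -> Kcore C `<=` Tcone C theta) /\
    (is_cone (Fset C theta0) ->
       (forall theta, C theta ->
          (Kcore C = Tcone C theta <-> C (theta0 - (theta - theta0)))) /\
       Kcore C = Tcone C theta0 /\ Tcone C theta0 = Fset C theta0).
Proof.
move=> C0 Ccl Ccv t0 Ct0.
have KR : Kcore C = [set v | ray v `<=` Fset C t0].
  apply/seteqP; split => v.
    by move=> Kv; apply: K_sub_rec => // th Cth; exact: Kv.
  by move=> hv th Cth; exact: rec_sub_K hv th Cth.
have RS : [set v | ray v `<=` Fset C t0] =
    \bigcap_(sigma in [set s : R | 0 < s]) sdiv (Fset C t0) sigma.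
  apply/seteqP; split => v.
    move=> hv s s0; exists (s *: v).
      by apply: hv; exists s => //; exact: ltW.
    by rewrite scalerA mulVf ?gt_eqF // scale1r.
  move=> hv _ [a a0 <-].
  move: a0; rewrite /= le_eqVlt => /orP [/eqP <-|apos].
    by rewrite scale0r; exists t0 => //; rewrite subrr.
  have [s Fs hs] := hv a apos.
  by rewrite -hs scalerA mulfV ?gt_eqF // scale1r.
have KT : forall th, C th -> Kcore C `<=` Tcone C th.
  by move=> th Cth v Kv; exact: Kv th Cth.
split; first by split; [exact: KR | rewrite KR].
split; first exact: KT.
move=> Fc.
have KF : Kcore C = Fset C t0.
  rewrite KR; apply/seteqP; split => v /=.
    by move=> hv; rewrite -[v]scale1r; apply: hv; exists 1 => //=; exact: ler01.
  by move=> Fv _ [a a0 <-]; exact: Fc.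
have Fcl := @Fset_closed R n C t0 Ccl.
have Fadd := @Fset_add R n C t0 Ccv Fc.
have iff : forall th, C th -> (Kcore C = Tcone C th <-> C (t0 - (th - t0))).
  move=> th Cth; split.
    move=> KTe.
    have := @cone_sub_T _ _ C th t0 1 Ct0 ler01.
    rewrite -KTe KF scale1r => /Fset_iff.
    by rewrite opprB [X in C X -> _]addrC.
  move=> Cr; apply/seteqP; split; first exact: KT.
  rewrite KF /Tcone (proj1 (closure_id _) Fcl); apply: closureS.
  move=> w [al [y [al0 [Cy ->]]]].
  apply: Fc => //.
  have -> : y - th = (y - t0) + (t0 - th) by rewrite addrA subrK.
  apply: Fadd; first by apply/Fset_iff; rewrite subrK.
  by apply/Fset_iff; rewrite addrC -opprB.
have KT0 : Kcore C = Tcone C t0 by apply/(iff t0 Ct0); rewrite subrr subr0.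
split; first exact: iff.
by split; [exact: KT0 | rewrite -KT0 KF].
Qed.
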